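(* Let $F$ be the graph with vertex set $\{a,b,c,d,e,g,h,i,x,x'\}$ and edge set $\{de,\ da,\ ae,\ dc,\ ec,\ ac,\ eg,\ cg,\ db,\ ab,\ cb,\ gb,\ ex',\ bx',\ di,\ ix,\ ah,\ hx\}$. Then $F$ has an acyclic $(\mathcal{S}_3,\mathcal{S}_3)$-colouring, and in every acyclic $(\mathcal{S}_3,\mathcal{S}_3)$-colouring $f$ of $F$ we have $f(x)=f(x')$, the vertex $x$ has exactly two neighbours coloured $f(x)$, and the vertex $x'$ has exactly one neighbour coloured $f(x')$.
   Context: An acyclic $(\mathcal{S}_3,\mathcal{S}_3)$-colouring of a graph $G$ is a map $c:V(G)\to\{1,2\}$ (not necessarily proper) such that each of the two colour classes induces a subgraph of maximum degree at most $3$, and there is no cycle in $G$ every edge of which joins a vertex of colour $1$ to a vertex of colour $2$. *)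

(* Defs.v *)
From HB Require Import structures.
From mathcomp Require Import all_boot.
Set Implicit Arguments. Unset Strict Implicit. Unset Printing Implicit Defensive.

(* Generic notions for a simple graph given by a symmetric irreflexive
   relation [adj] on a finite type [V]; a 2-colouring is a map V -> bool
   (colour 1 = false, colour 2 = true). *)

Definition S3S3_degree_ok (V : finType) (adj : rel V) (c : V -> bool) : Prop :=
  forall v : V, #|[set u | adj v u & c u == c v]| <= 3.

Definition bichromatic (V : finType) (adj : rel V) (c : V -> bool) : rel V :=
  fun u v => adj u v && (c u != c v).

Definition no_bichromatic_cycle (V : finType) (adj : rel V) (c : V -> bool) : Prop :=
  forall s : seq V, uniq s -> 3 <= size s -> ~~ cycle (bichromatic adj c) s.

Definition acyclic_S3S3_colouring (V : finType) (adj : rel V) (c : V -> bool) : Prop :=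
  S3S3_degree_ok adj c /\ no_bichromatic_cycle adj c.

Inductive FV := Va | Vb | Vc | Vd | Ve | Vg | Vh | Vi | Vx | Vx'.

Definition FV_to_ord (v : FV) : 'I_10 :=
  match v with
  | Va => @Ordinal 10 0 isT | Vb => @Ordinal 10 1 isT | Vc => @Ordinal 10 2 isT
  | Vd => @Ordinal 10 3 isT | Ve => @Ordinal 10 4 isT | Vg => @Ordinal 10 5 isT
  | Vh => @Ordinal 10 6 isT | Vi => @Ordinal 10 7 isT | Vx => @Ordinal 10 8 isT
  | Vx' => @Ordinal 10 9 isT
  end.

Definition ord_to_FV (i : 'I_10) : FV :=
  match val i with
  | 0 => Va | 1 => Vb | 2 => Vc | 3 => Vd | 4 => Ve | 5 => Vg
  | 6 => Vh | 7 => Vi | 8 => Vx | _ => Vx'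
  end.

Lemma FV_to_ordK : cancel FV_to_ord ord_to_FV.
Proof. by case. Qed.

HB.instance Definition _ := Equality.copy FV (can_type FV_to_ordK).
HB.instance Definition _ := Choice.copy FV (can_type FV_to_ordK).
HB.instance Definition _ := Countable.copy FV (can_type FV_to_ordK).
HB.instance Definition _ := Finite.copy FV (can_type FV_to_ordK).

Definition F_edges : seq (FV * FV) :=
  [:: (Vd, Ve); (Vd, Va); (Va, Ve); (Vd, Vc); (Ve, Vc); (Va, Vc); (Ve, Vg);
      (Vc, Vg); (Vd, Vb); (Va, Vb); (Vc, Vb); (Vg, Vb); (Ve, Vx'); (Vb, Vx');
      (Vd, Vi); (Vi, Vx); (Va, Vh); (Vh, Vx)].

Definition Fadj : rel FV :=
  fun u v => ((u, v) \in F_edges) || ((v, u) \in F_edges).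

(* Main.v *)
Require Import Defs.
From mathcomp Require Import all_boot.
From Stdlib Require Import FunctionalExtensionality.

Definition cycL : seq (seq FV) :=
[:: [:: Vb; Vg; Ve; Vc]; [:: Va; Vd; Vc; Ve]; [:: Va; Vd; Ve; Vc]; [:: Vb; Vx'; Ve; Vc]; [:: Vb; Vc; Ve; Vd]; [:: Vb; Vx'; Ve; Vg]; [:: Vb; Vd; Vc; Vg]; [:: Va; Vc; Vg; Ve]; [:: Va; Ve; Vd; Vi; Vx; Vh]; [:: Va; Vc; Vd; Ve]; [:: Va; Vc; Vd; Vb]; [:: Va; Ve; Vd; Vb]; [:: Va; Vb; Vc; Vd]; [:: Va; Vd; Vb; Vc]; [:: Va; Vh; Vx; Vi; Vd; Vb]; [:: Va; Vc; Vg; Vb]].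

Definition allFV := [:: Va; Vb; Vc; Vd; Ve; Vg; Vh; Vi; Vx; Vx'].

Definition degc (f : FV -> bool) v := count (fun u => Fadj v u && (f u == f v)) allFV.

Definition deg_b (f : FV -> bool) := all (fun v => degc f v <= 3) allFV.

Definition cyc_b (f : FV -> bool) := has (cycle (bichromatic Fadj f)) cycL.

Definition concl_b (f : FV -> bool) :=
  [&& f Vx == f Vx', degc f Vx == 2 & degc f Vx' == 1].

Definition mkf (b : 'I_10 -> bool) : FV -> bool := fun v => b (FV_to_ord v).

Definition mk (b1 b2 b3 b4 b5 b6 b7 b8 b9 b10 : bool) : FV -> bool :=
  fun v => match v with Va => b1 | Vb => b2 | Vc => b3 | Vd => b4 | Ve => b5
  | Vg => b6 | Vh => b7 | Vi => b8 | Vx => b9 | Vx' => b10 end.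

Lemma all_check b1 b2 b3 b4 b5 b6 b7 b8 b9 b10 :
  deg_b (mk b1 b2 b3 b4 b5 b6 b7 b8 b9 b10) ==>
  cyc_b (mk b1 b2 b3 b4 b5 b6 b7 b8 b9 b10) || concl_b (mk b1 b2 b3 b4 b5 b6 b7 b8 b9 b10).
Proof.
by case: b1; case: b2; case: b3; case: b4; case: b5; case: b6; case: b7;
  case: b8; case: b9; case: b10; vm_compute.
Qed.

Lemma cycle_two (T : eqType) (r : rel T) (s : seq T) (x : T) :
  uniq s -> 3 <= size s -> cycle r s -> x \in s ->
  exists y z, [/\ y \in s, z \in s, y != z, r x y & r z x].
Proof.
move=> us ss cs xs.
set k := index x s.
have : rot k s = x :: drop k.+1 s ++ take k s.
  rewrite /rot -{1}(nth_index x xs) -/k.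
  by rewrite (drop_nth x) ?index_mem.
set t := drop k.+1 s ++ take k s => Er.
have ur : uniq (rot k s) by rewrite rot_uniq.
have cr : cycle r (rot k s) by rewrite rot_cycle.
have sr : size (rot k s) = size s by rewrite size_rot.
rewrite Er in ur cr sr.
case: t Er ur cr sr => [|y t'] // Er ur cr sr.
  by rewrite -sr in ss.
case: t' Er ur cr sr => [|w t''] Er ur cr sr; first by rewrite -sr in ss.
exists y, (last w t''); split.
- by rewrite -(mem_rot k) Er !inE eqxx orbT.
- by rewrite -(mem_rot k) Er; apply: mem_behead; apply: mem_behead; exact: mem_last.
- move: ur => /andP [_ /andP [H _]].
  by apply: contraNneq H => ->; exact: mem_last.
- by case/andP: cr.
- by move: cr; rewrite /cycle rcons_path => /andP [_].
Qed.

Lemma allFV_mem v : v \in allFV.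
Proof. by case: v. Qed.

Lemma degc_card (f : FV -> bool) v : #|[set u | Fadj v u & f u == f v]| = degc f v.
Proof.
rewrite /degc -size_filter.
have U : uniq allFV by []. rewrite -(card_uniqP (filter_uniq _ U)).
by apply: eq_card => u; rewrite inE mem_filter allFV_mem andbT.
Qed.

Fixpoint elim_ok (f : FV -> bool) (l : seq FV) :=
  if l is v :: l' then (count (bichromatic Fadj f v) l' <= 1) && elim_ok f l' else true.

Lemma bich_sym f u v : bichromatic Fadj f u v = bichromatic Fadj f v u.
Proof. by rewrite /bichromatic /Fadj orbC eq_sym. Qed.

Lemma elim_nocycle f l : elim_ok f l -> uniq l -> forall s, uniq s -> 3 <= size s ->
  cycle (bichromatic Fadj f) s -> {subset s <= l} -> False.
Proof.
elim: l => [|v l IH] /=.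
  move=> _ _ [|x s] //= _ _ _ sub.
  by have := sub x; rewrite inE eqxx => /(_ isT).
move=> /andP [cnt ok] /andP [vl ul] s us ss cs sub.
case vs: (v \in s); last first.
  apply: (IH ok ul s us ss cs) => u us'.
  have := sub u us'; rewrite inE => /orP [/eqP E|//].
  by rewrite -E us' in vs.
have [y [z [ys zs yz ry rz]]] := @cycle_two _ _ s v us ss cs vs.
have nv w : bichromatic Fadj f v w -> w != v.
  by apply: contraTneq => ->; rewrite /bichromatic eqxx andbF.
have inl w : w \in s -> bichromatic Fadj f v w -> w \in l.
  move=> ws rw; have := sub w ws; rewrite inE => /orP [/eqP E|//].
  by move: (nv w rw); rewrite E eqxx.
rewrite bich_sym in rz.
have : size [:: y; z] <= size (filter (bichromatic Fadj f v) l).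
  apply: uniq_leq_size; first by rewrite /= inE yz.
  move=> w; rewrite !inE => /orP [] /eqP ->; rewrite mem_filter.
    by rewrite ry (inl y ys ry).
  by rewrite rz (inl z zs rz).
by rewrite size_filter /=; move: cnt; case: (count _ _) => [|[|]].
Qed.

Lemma cycL_ok : all (fun s => uniq s && (3 <= size s)) cycL.
Proof. by vm_compute. Qed.

Definition f0 := mk false false false false true true true true true true.
Definition ord0 := [:: Vh; Va; Vi; Vd; Ve; Vc; Vg; Vb; Vx; Vx'].

Theorem mainTheorem7 :
  (exists f : FV -> bool, acyclic_S3S3_colouring Fadj f) /\
  (forall f : FV -> bool, acyclic_S3S3_colouring Fadj f ->
     [/\ f Vx = f Vx',
         #|[set u | Fadj Vx u & f u == f Vx]| = 2
       & #|[set u | Fadj Vx' u & f u == f Vx']| = 1]).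
Proof.
split.
  exists f0; split.
    by move=> v; rewrite degc_card; case: v; vm_compute.
  move=> s us ss; apply/negP => cs.
  apply: (@elim_nocycle f0 ord0 _ _ s us ss cs); first by vm_compute.
    by vm_compute.
  by move=> u _; case: u.
move=> f [Hd Hc].
have Ef : f = mk (f Va) (f Vb) (f Vc) (f Vd) (f Ve) (f Vg) (f Vh) (f Vi) (f Vx) (f Vx').
  by apply: functional_extensionality; case.
have K := all_check (f Va) (f Vb) (f Vc) (f Vd) (f Ve) (f Vg) (f Vh) (f Vi) (f Vx) (f Vx').
rewrite -Ef in K.
have D : deg_b f.
  by apply/allP => v _; rewrite -degc_card; apply: Hd.
have C : cyc_b f = false.
  apply/negP => /hasP [s sL cs].
  have := allP cycL_ok s sL => /andP [us ss].
  by move: (Hc s us ss); rewrite cs.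
move: K; rewrite D C /= /concl_b => /and3P [/eqP E1 /eqP E2 /eqP E3].
by split; rewrite // degc_card.
Qed.
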